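(* Let $\mathbf M$ be an ergodic channel on a finite alphabet $\mathcal A$ such that for all distinct $i,j\in\mathcal A$ there exists $\ell\in\mathcal A$ with $\mathbf M_{i,\ell}\neq\mathbf M_{j,\ell}$ (i.e. all rows of $\mathbf M$ are distinct). Then there exists $b_0$ such that for every integer $b\ge b_0$ the reconstruction problem for $T_b$ and $\mathbf M$ is solvable.
   Context: Tree process on a rooted tree with root $\rho$: the root label is drawn from an initial distribution on $\mathcal A$, and each non-root vertex $v$ with parent $v'$ receives label $j$ with probability $\mathbf M_{\sigma_{v'},j}$, independently across edges given parent labels. $T_b$ is the infinite rooted tree in which every vertex has exactly $b$ children. $L_n$ is the set of vertices at distance $n$ from $\rho$ and $\sigma_n=(\sigma_v)_{v\in L_n}$. With $\mathbf P_n^\ell$ the conditional law of $\sigma_n$ given $\sigma_\rho=\ell$ and $D_V(P,Q)=\frac12\sum|P-Q|$, the reconstruction problem is solvable if there exist $i,j$ with $\lim_n D_V(\mathbf P_n^i,\mathbf P_n^j)>0$. *)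

(* Defs.v *)
From HB Require Import structures.
From mathcomp Require Import all_boot all_order all_algebra.
From mathcomp Require Import all_classical all_reals all_analysis.
Set Implicit Arguments. Unset Strict Implicit. Unset Printing Implicit Defensive.
Import Order.TTheory GRing.Theory Num.Theory numFieldNormedType.Exports.
Local Open Scope ring_scope.

Definition stochastic {R : realType} {A : finType} (M : A -> A -> R) : Prop :=
  (forall i j, 0 <= M i j) /\ (forall i, \sum_(j : A) M i j = 1).

Fixpoint Mpow {R : realType} {A : finType} (M : A -> A -> R) (k : nat) : A -> A -> R :=
  match k with
  | 0 => fun i j => if i == j then 1 else 0
  | k'.+1 => fun i j => \sum_(l : A) Mpow M k' i l * M l j
  end.

(* Ergodic (irreducible and aperiodic) finite chain = primitive:
   some power of M has all entries positive. *)
Definition ergodic {R : realType} {A : finType} (M : A -> A -> R) : Prop :=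
  stochastic M /\ exists k : nat, forall i j, 0 < Mpow M k.+1 i j.

(* Vertices of T_b at distance n from the root: words of length n over 'I_b;
   the children of v are the words rcons v c, c : 'I_b.
   sigma_n is a configuration {ffun n.-tuple 'I_b -> A}.
   lawL M n l s = P_n^l(s) = P(sigma_n = s | sigma_root = l), computed by
   summing out level n from the level-(n+1) joint law (Markov along levels). *)
Fixpoint lawL {R : realType} {A : finType} (b : nat) (M : A -> A -> R) (n : nat)
  : A -> {ffun n.-tuple 'I_b -> A} -> R :=
  match n return A -> {ffun n.-tuple 'I_b -> A} -> R with
  | 0 => fun l s => if s [tuple] == l then 1 else 0
  | n'.+1 => fun l s =>
      \sum_(t : {ffun n'.-tuple 'I_b -> A})
        @lawL R A b M n' l t *
        \prod_(v : n'.-tuple 'I_b) \prod_(c : 'I_b)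
            M (t v) (s [tuple of rcons v c])
  end.
Arguments lawL {R A} b M n.

Definition DV {R : realType} {T : finType} (P Q : T -> R) : R :=
  2^-1 * \sum_(x : T) `|P x - Q x|.

Definition reconstruction_solvable {R : realType} {A : finType}
  (b : nat) (M : A -> A -> R) : Prop :=
  exists i j : A,
    cvgn (fun n => DV (lawL b M n i) (lawL b M n j)) /\
    0 < limn (fun n => DV (lawL b M n i) (lawL b M n j)).

(* Main.v *)
Require Import Defs.
From mathcomp Require Import all_boot all_order all_algebra.
From mathcomp Require Import all_classical all_reals all_analysis.
From mathcomp Require Import lra ring.
Import Order.TTheory GRing.Theory Num.Theory numFieldNormedType.Exports.
Local Open Scope ring_scope.

Set Implicit Arguments. Unset Strict Implicit. Unset Printing Implicit Defensive.

Section Tup.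
Variable b : nat.
Definition pre n (u : n.+1.-tuple 'I_b) : n.-tuple 'I_b :=
  [tuple of belast (thead u) (behead u)].
Definition lst n (u : n.+1.-tuple 'I_b) : 'I_b := last (thead u) (behead u).

Lemma val_eta n (u : n.+1.-tuple 'I_b) : val u = thead u :: behead u.
Proof. by rewrite [in LHS](tuple_eta u). Qed.

Lemma rcons_pre n (u : n.+1.-tuple 'I_b) : [tuple of rcons (pre u) (lst u)] = u.
Proof. apply: val_inj => /=; by rewrite -lastI -val_eta. Qed.

Lemma pre_rcons n (v : n.-tuple 'I_b) c :
  pre [tuple of rcons v c] = v /\ lst [tuple of rcons v c] = c.
Proof.
have := lastI (thead [tuple of rcons v c]) (behead [tuple of rcons v c]).
rewrite -val_eta /= => /esym /eqP; rewrite eqseq_rcons => /andP[/eqP h1 /eqP h2].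
by split => //; apply: val_inj.
Qed.
End Tup.

Section Reidx.
Variables (R : realType) (A : finType) (b : nat).
Definition join n (S : {ffun n.-tuple 'I_b -> {ffun 'I_b -> A}}) :
  {ffun n.+1.-tuple 'I_b -> A} := [ffun u => S (pre u) (lst u)].
Definition splitf n (s : {ffun n.+1.-tuple 'I_b -> A}) :
  {ffun n.-tuple 'I_b -> {ffun 'I_b -> A}} :=
  [ffun v : n.-tuple 'I_b => [ffun c : 'I_b => s [tuple of rcons v c]]].

Lemma join_rcons n S (v : n.-tuple 'I_b) c : join S [tuple of rcons v c] = S v c.
Proof. by rewrite ffunE; case: (pre_rcons v c) => -> ->. Qed.

Lemma sum_join n (F : {ffun n.+1.-tuple 'I_b -> A} -> R) :
  \sum_s F s = \sum_S F (join S).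
Proof.
rewrite (reindex (@join n)) //; apply: onW_bij; exists (@splitf n).
- move=> S; apply/ffunP => v; apply/ffunP => c; rewrite !ffunE; by case: (pre_rcons v c) => -> ->.
- move=> s; apply/ffunP => u; by rewrite !ffunE rcons_pre.
Qed.

Lemma prod_split n (G : n.+1.-tuple 'I_b -> R) :
  \prod_u G u = \prod_(v : n.-tuple 'I_b) \prod_(c : 'I_b) G [tuple of rcons v c].
Proof.
rewrite pair_big /= (reindex (fun p : n.-tuple 'I_b * 'I_b => [tuple of rcons p.1 p.2])) //.
apply: onW_bij; exists (fun u => (pre u, lst u)).
- by case=> v c /=; case: (pre_rcons v c) => -> ->.
- by move=> u /=; rewrite rcons_pre.
Qed.
End Reidx.

Unset Implicit Arguments. Set Strict Implicit.

Section Dec.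
Variables (R : realType) (A : finType) (b : nat) (M : A -> A -> R).
Variable psi : {ffun 'I_b -> A} -> A.

Definition MK (K : A -> A -> R) x z := \sum_u M x u * K u z.
Definition H n (K : A -> A -> R) l (s : {ffun n.-tuple 'I_b -> A}) :=
  \sum_t lawL b M n l t * \prod_v K (t v) (s v).
Definition Q (K : A -> A -> R) x y :=
  \sum_(w : {ffun 'I_b -> A}) (\prod_c MK K x (w c)) * (psi w == y)%:R.

Lemma H_succ n K l s : H n.+1 K l s =
  \sum_t lawL b M n l t * \prod_(v : n.-tuple 'I_b) \prod_(c : 'I_b)
      MK K (t v) (s [tuple of rcons v c]).
Proof.
rewrite /H /=.
under eq_bigr do rewrite mulr_suml.
rewrite exchange_big /=; apply: eq_bigr => t _.
under eq_bigr do rewrite -mulrA.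
rewrite -mulr_sumr; congr (_ * _).
rewrite sum_join.
transitivity (\sum_(S : {ffun n.-tuple 'I_b -> {ffun 'I_b -> A}})
   \prod_(v : n.-tuple 'I_b) \prod_(c : 'I_b)
     (M (t v) (S v c) * K (S v c) (s [tuple of rcons v c]))).
  apply: eq_bigr => S _; rewrite prod_split -big_split; apply: eq_bigr => v _.
  by rewrite -big_split; apply: eq_bigr => c _; rewrite join_rcons.
rewrite -(bigA_distr_bigA (fun v (f : {ffun 'I_b -> A}) => \prod_(c : 'I_b)
     (M (t v) (f c) * K (f c) (s [tuple of rcons v c])))) /=.
apply: eq_bigr => v _.
rewrite -(bigA_distr_bigA (fun c y => (M (t v) y * K y (s [tuple of rcons v c])))) /=.
by apply: eq_bigr => c _.
Qed.
End Dec.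
Arguments MK {R A} M K x z.
Arguments H {R A b} M n K l s.
Arguments Q {R A b} M psi K x y.
Arguments H_succ {R A b} M n K l s.

Section Dec2.
Variables (R : realType) (A : finType) (b : nat) (M : A -> A -> R).
Variable psi : {ffun 'I_b -> A} -> A.

Definition h n (s : {ffun n.+1.-tuple 'I_b -> A}) : {ffun n.-tuple 'I_b -> A} :=
  [ffun v : n.-tuple 'I_b => psi [ffun c : 'I_b => s [tuple of rcons v c]]].

Fixpoint g n : {ffun n.-tuple 'I_b -> A} -> A :=
  match n return {ffun n.-tuple 'I_b -> A} -> A with
  | 0 => fun s => s [tuple]
  | n'.+1 => fun s => g n' (h n' s)
  end.

Fixpoint iterQ n (K : A -> A -> R) : A -> A -> R :=
  match n with 0 => K | n'.+1 => iterQ n' (Q M psi K) end.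

Definition Idk (x y : A) : R := (x == y)%:R.

Lemma ffun_ind (I : finType) (B : eqType) (f f' : {ffun I -> B}) :
  (f == f')%:R = \prod_i (f i == f' i)%:R :> R.
Proof.
have [->|ne] := eqVneq f f'.
  by rewrite big1 // => i _; rewrite eqxx.
have [i hi] : exists i, f i != f' i.
  apply/existsP; apply: contraNT ne; rewrite negb_exists => /forallP H0.
  by apply/eqP/ffunP => i; apply/eqP; have := H0 i; rewrite negbK.
by rewrite (bigD1 i) //= (negbTE hi) mul0r.
Qed.

Lemma sum_ind (T : finType) (x : T) (X : T -> R) :
  \sum_u (x == u)%:R * X u = X x.
Proof.
rewrite (bigD1 x) //= eqxx mul1r big1 ?addr0 // => u hu.
by rewrite eq_sym (negbTE hu) mul0r.
Qed.

Lemma dec n K l u :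
  \sum_s H M n.+1 K l s * (h n s == u)%:R = H M n (Q M psi K) l u.
Proof.
rewrite /H. under eq_bigr do rewrite -/(H M n.+1 K l _) H_succ mulr_suml.
rewrite exchange_big /=; apply: eq_bigr => t _.
under eq_bigr do rewrite -mulrA.
rewrite -mulr_sumr; congr (_ * _).
rewrite sum_join.
transitivity (\sum_(S : {ffun n.-tuple 'I_b -> {ffun 'I_b -> A}})
   \prod_(v : n.-tuple 'I_b)
     ((\prod_(c : 'I_b) MK M K (t v) (S v c)) * (psi (S v) == u v)%:R)).
  apply: eq_bigr => S _; rewrite big_split /=; congr (_ * _).
    by apply: eq_bigr => v _; apply: eq_bigr => c _; rewrite join_rcons.
  rewrite ffun_ind; apply: eq_bigr => v _; rewrite ffunE; congr ((psi _ == _)%:R).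
  by apply/ffunP => c; rewrite ffunE join_rcons.
rewrite -(bigA_distr_bigA (fun v (f : {ffun 'I_b -> A}) =>
     ((\prod_(c : 'I_b) MK M K (t v) (f c)) * (psi f == u v)%:R))) /=.
by apply: eq_bigr.
Qed.

Lemma sum0 (F : {ffun 0.-tuple 'I_b -> A} -> R) :
  \sum_s F s = \sum_(y : A) F [ffun => y].
Proof.
rewrite (reindex (fun y : A => [ffun => y])) //; apply: onW_bij.
exists (fun s : {ffun 0.-tuple 'I_b -> A} => s [tuple]); first by move=> y; rewrite ffunE.
by move=> s; apply/ffunP => v; rewrite ffunE (tuple0 v).
Qed.

Lemma prod0 (G : 0.-tuple 'I_b -> R) : \prod_v G v = G [tuple].
Proof. by rewrite (big_pred1 [tuple]) // => v; rewrite (tuple0 v) /= eq_refl. Qed.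

Lemma main n K l a :
  \sum_s H M n K l s * (g n s == a)%:R = iterQ n K l a.
Proof.
elim: n K => [|n IH] K /=.
  transitivity (\sum_(y : A) K l y * (y == a)%:R).
    rewrite sum0; apply: eq_bigr => y _; rewrite ffunE; congr (_ * _).
    rewrite /H sum0 (bigD1 l) //= [X in _ + X]big1 ?addr0.
      by rewrite ffunE eqxx mul1r prod0 !ffunE.
    by move=> y' hy; rewrite ffunE (negbTE hy) mul0r.
  by under eq_bigr do rewrite mulrC eq_sym; rewrite sum_ind.
rewrite -IH.
transitivity (\sum_s \sum_u H M n.+1 K l s * ((h n s == u)%:R * (g n u == a)%:R)).
  apply: eq_bigr => s _; rewrite -mulr_sumr; congr (_ * _).
  by rewrite sum_ind.
rewrite exchange_big /=; apply: eq_bigr => u _.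
by rewrite -dec mulr_suml; apply: eq_bigr => s _; rewrite mulrA.
Qed.

Lemma lawL_H n l s : lawL b M n l s = H M n Idk l s.
Proof.
rewrite /H /Idk; under eq_bigr do rewrite -ffun_ind.
by under eq_bigr do rewrite mulrC eq_sym; rewrite sum_ind.
Qed.
End Dec2.

Section Stoch.
Variables (R : realType) (A : finType) (b : nat) (M : A -> A -> R).
Variable psi : {ffun 'I_b -> A} -> A.
Hypothesis hM : stochastic M.

Lemma sum_prod_one (r : A -> R) : \sum_y r y = 1 ->
  \sum_(w : {ffun 'I_b -> A}) \prod_c r (w c) = 1.
Proof.
move=> hr; rewrite -(bigA_distr_bigA (fun (_ : 'I_b) y => r y)) /=.
by rewrite big1.
Qed.

Lemma MK_stoch K : stochastic K -> stochastic (MK M K).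
Proof.
case: hM => M0 M1 [K0 K1]; split.
  by move=> x z; apply: sumr_ge0 => u _; apply: mulr_ge0.
move=> x; rewrite /MK exchange_big /=.
by under eq_bigr do rewrite -mulr_sumr K1 mulr1; apply: M1.
Qed.

Lemma Q_stoch K : stochastic K -> stochastic (Q M psi K).
Proof.
move=> /MK_stoch [P0 P1]; split.
  move=> x y; apply: sumr_ge0 => w _; apply: mulr_ge0 => //.
  by apply: prodr_ge0 => c _.
move=> x; rewrite /Q exchange_big /=.
transitivity (\sum_(w : {ffun 'I_b -> A}) \prod_c MK M K x (w c)).
  apply: eq_bigr => w _; rewrite -mulr_sumr.
  by rewrite -[RHS]mulr1; congr (_ * _); under eq_bigr do rewrite -[_%:R]mulr1; rewrite sum_ind.
exact: sum_prod_one.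
Qed.

Lemma sumTr n (t : {ffun n.-tuple 'I_b -> A}) :
  \sum_(s : {ffun n.+1.-tuple 'I_b -> A})
     \prod_(v : n.-tuple 'I_b) \prod_(c : 'I_b) M (t v) (s [tuple of rcons v c]) = 1.
Proof.
case: hM => M0 M1.
rewrite sum_join.
transitivity (\sum_(S : {ffun n.-tuple 'I_b -> {ffun 'I_b -> A}})
   \prod_(v : n.-tuple 'I_b) \prod_(c : 'I_b) M (t v) (S v c)).
  by apply: eq_bigr => S _; apply: eq_bigr => v _; apply: eq_bigr => c _; rewrite join_rcons.
rewrite -(bigA_distr_bigA (fun v (f : {ffun 'I_b -> A}) =>
     \prod_(c : 'I_b) M (t v) (f c))) /=.
by rewrite big1 // => v _; apply: sum_prod_one.
Qed.

Lemma DV_mono n i j :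
  DV (lawL b M n.+1 i) (lawL b M n.+1 j) <= DV (lawL b M n i) (lawL b M n j).
Proof.
case: hM => M0 M1.
rewrite /DV ler_wpM2l ?invr_ge0 ?ler0n //=.
set Tr := fun (t : {ffun n.-tuple 'I_b -> A}) (s : {ffun n.+1.-tuple 'I_b -> A}) =>
  \prod_(v : n.-tuple 'I_b) \prod_(c : 'I_b) M (t v) (s [tuple of rcons v c]).
have Tr0 t s : 0 <= Tr t s by apply: prodr_ge0 => v _; apply: prodr_ge0.
apply: (@le_trans _ _ (\sum_s \sum_t `|lawL b M n i t - lawL b M n j t| * Tr t s)).
  apply: ler_sum => s _; rewrite -sumrB.
  under eq_bigr do rewrite -mulrBl.
  apply: (le_trans (ler_norm_sum _ _ _)); apply: ler_sum => t _.
  by rewrite normrM (ger0_norm (Tr0 t s)).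
rewrite exchange_big /=; apply: ler_sum => t _.
by rewrite -mulr_sumr sumTr mulr1.
Qed.
End Stoch.

Section Cheb.
Variables (R : realType) (A : finType) (b : nat).
Variable r : A -> R.
Hypothesis r0 : forall y, 0 <= r y.
Hypothesis r1 : \sum_y r y = 1.

Lemma r_le1 z : r z <= 1.
Proof. by rewrite -r1 (bigD1 z) //= lerDl sumr_ge0. Qed.

Definition Nz (w : {ffun 'I_b -> A}) z : R := \sum_c (w c == z)%:R.

Lemma prod_if (F : 'I_b -> R) c : \prod_d (if d == c then F d else 1) = F c.
Proof. by rewrite -big_mkcond big_pred1_eq. Qed.

Section Z.
Variable z : A.
Let Y (y : A) : R := (y == z)%:R - r z.

Lemma Y_bound y : 0 <= Y y * Y y <= 1.
Proof.
have : -1 <= Y y <= 1.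
  rewrite /Y; have := r0 z; have := r_le1 z.
  by case: (y == z) => /= ? ?; apply/andP; split; lra.
move: (Y y) => u /andP[h1 h2]; apply/andP; split; nra.
Qed.

Lemma EYY c c' :
  \sum_(w : {ffun 'I_b -> A}) (\prod_d r (w d)) * (Y (w c) * Y (w c')) <= (c == c')%:R.
Proof.
set Phi := fun d y => (if d == c then Y y else 1) * (if d == c' then Y y else 1).
have -> : \sum_(w : {ffun 'I_b -> A}) (\prod_d r (w d)) * (Y (w c) * Y (w c'))
    = \prod_d \sum_y r y * Phi d y.
  rewrite (bigA_distr_bigA (fun d y => r y * Phi d y)) /=.
  apply: eq_bigr => w _; rewrite big_split /=; congr (_ * _).
  by rewrite /Phi big_split /= !(prod_if (fun d => Y (w d))).
have [e|ne] := eqVneq c c'.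
  rewrite /Phi -e; apply: prodr_ile1 => d _; apply/andP; split.
    apply: sumr_ge0 => y _; apply: mulr_ge0 => //.
    by case: (d == c); [case/andP: (Y_bound y)|rewrite mulr1].
  rewrite -[X in _ <= X]r1; apply: ler_sum => y _.
  rewrite -[X in _ <= X]mulr1; apply: ler_wpM2l => //.
  by case: (d == c); [case/andP: (Y_bound y)|rewrite mulr1].
rewrite (bigD1 c) //= [X in X * _](_ : _ = 0) ?mul0r //.
rewrite /Phi eqxx (negbTE ne).
under eq_bigr do rewrite mulr1 /Y mulrBr.
rewrite sumrB -mulr_suml r1 mul1r; apply/eqP; rewrite subr_eq0; apply/eqP.
by rewrite (bigD1 z) //= eqxx mulr1 big1 ?addr0 // => y hy; rewrite (negbTE hy) mulr0.
Qed.


Lemma cheb (e : R) : 0 < e -> (0 < b)%N ->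
  \sum_(w : {ffun 'I_b -> A}) (\prod_c r (w c)) *
     ((e * b%:R <= `|Nz w z - b%:R * r z|)%R)%:R <= (b%:R * e ^+ 2)^-1.
Proof.
move=> e0 b0.
have bR : 0 < (b%:R : R) by rewrite ltr0n.
have eb : 0 < e * b%:R by apply: mulr_gt0.
have NS w : Nz w z - b%:R * r z = \sum_c Y (w c).
  rewrite /Nz /Y sumrB; congr (_ - _); rewrite sumr_const card_ord.
  by rewrite mulr_natl.
have P0 w : 0 <= \prod_c r (w c) by apply: prodr_ge0.
apply: (@le_trans _ _ (\sum_(w : {ffun 'I_b -> A}) (\prod_c r (w c)) *
     ((\sum_c Y (w c)) ^+ 2 / (e * b%:R) ^+ 2))).
  apply: ler_sum => w _; apply: ler_wpM2l => //; rewrite NS.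
  case: (boolP (e * b%:R <= _)) => h /=.
    rewrite ler_pdivlMr ?exprn_gt0 // mul1r -(real_normK (num_real (\sum_c Y (w c)))).
    have := normr_ge0 (\sum_c Y (w c)); move: h.
    move: (\sum_c Y (w c)) => S; move: (e * b%:R) eb => x x0 h1 h2.
    rewrite !expr2; nra.
  by apply: divr_ge0; apply: sqr_ge0.
under eq_bigr do rewrite mulrA.
rewrite -mulr_suml.
have E2 : \sum_(w : {ffun 'I_b -> A}) (\prod_c r (w c)) * (\sum_c Y (w c)) ^+ 2 <= b%:R.
  have -> : \sum_(w : {ffun 'I_b -> A}) (\prod_c r (w c)) * (\sum_c Y (w c)) ^+ 2 =
     \sum_(c : 'I_b) \sum_(c' : 'I_b)
     \sum_(w : {ffun 'I_b -> A}) (\prod_d r (w d)) * (Y (w c) * Y (w c')).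
    rewrite (eq_bigr (fun w : {ffun 'I_b -> A} => \sum_(c : 'I_b) \sum_(c' : 'I_b)
        (\prod_d r (w d)) * (Y (w c) * Y (w c')))); last first.
      move=> w _; rewrite expr2 mulr_suml mulr_sumr; apply: eq_bigr => c _.
      by rewrite mulr_sumr mulr_sumr; apply: eq_bigr => c' _.
    rewrite exchange_big /=; apply: eq_bigr => c _.
    by rewrite exchange_big.
  apply: (@le_trans _ _ (\sum_(c : 'I_b) \sum_(c' : 'I_b) (c == c')%:R)).
    by apply: ler_sum => c _; apply: ler_sum => c' _; apply: EYY.
  rewrite (eq_bigr (fun _ => 1)) ?sumr_const ?card_ord // => c _.
  by under eq_bigr do rewrite -[_%:R]mulr1; rewrite sum_ind.
apply: (le_trans (ler_wpM2r _ E2)); first by rewrite invr_ge0 sqr_ge0.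
rewrite le_eqVlt; apply/orP; left; apply/eqP.
have bne : (b%:R : R) != 0 by rewrite gt_eqF.
have ene : e != 0 by rewrite gt_eqF.
by field; rewrite bne ene.
Qed.

End Z.
End Cheb.
Arguments Nz {R A b} w z.

Section Good.
Variables (R : realType) (A : finType) (b : nat) (M : A -> A -> R).
Hypothesis hM : stochastic M.
Variable d : A.
Variable gam : R.
Hypothesis gam0 : 0 < gam.
Hypothesis sep : forall i j, i != j -> gam <= \sum_z `|M i z - M j z|.

Let m : R := #|A|%:R.

Definition psi (w : {ffun 'I_b -> A}) : A :=
  odflt d [pick y | \sum_z `|Nz w z / b%:R - M y z| < gam / 2].

Lemma m_gt0 : 0 < m.
Proof. by rewrite /m ltr0n; apply/card_gt0P; exists d. Qed.

Lemma psi_ok w x : (forall z, `|Nz w z / b%:R - M x z| < gam / (2 * m)) -> psi w = x.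
Proof.
move=> hz.
have hx : \sum_z `|Nz w z / b%:R - M x z| < gam / 2.
  apply: (@lt_le_trans _ _ (\sum_(z : A) gam / (2 * m))).
    by apply: ltr_sum => //; apply/hasP; exists x => //; rewrite mem_index_enum.
  rewrite sumr_const -/m -mulr_natr -/m.
  have := m_gt0 => mp; rewrite le_eqVlt; apply/orP; left; apply/eqP.
  by field; rewrite gt_eqF.
rewrite /psi; case: pickP => [y hy|/(_ x)]; last by rewrite hx.
apply/eqP; apply: contraT => /= ne.
have H0 := sep y x ne.
suff H2 : \sum_z `|M y z - M x z| < gam by move: (le_lt_trans H0 H2); rewrite ltxx.
apply: (@le_lt_trans _ _ (\sum_z (`|Nz w z / b%:R - M y z| + `|Nz w z / b%:R - M x z|))).
  apply: ler_sum => z _; rewrite -(distrC (M y z)).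
  by apply: (le_trans _ (ler_normD _ _)); rewrite addrA subrK distrC.
rewrite big_split /=; have := hy; move: (\sum_z _) (\sum_z _) hx => a1 a2.
lra.
Qed.

Lemma good_step K (eps : R) : stochastic K -> eps = gam / (4 * m) ->
  (forall y, 1 - eps <= K y y) -> (0 < b)%N ->
  m / (b%:R * eps ^+ 2) <= eps ->
  forall x, 1 - eps <= Q M psi K x x.
Proof.
move=> hK he hKd b0 hb x.
have [K0 K1] := hK.
have [r0 r1] := MK_stoch R A M hM K hK.
set r := MK M K x.
have mp := m_gt0.
have ep : 0 < eps by rewrite he divr_gt0 // mulr_gt0 // ltr0n.
have bR : 0 < (b%:R : R) by rewrite ltr0n.
have Kle y z : y != z -> K y z <= eps.
  move=> ne; have := hKd y; have : K y y + K y z <= 1.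
    rewrite -(K1 y) (bigD1 y) //= lerD2l (bigD1 z) 1?eq_sym //= lerDl.
    by apply: sumr_ge0.
  have := K0 y z; lra.
have close z : `|r z - M x z| <= eps.
  have -> : r z - M x z = \sum_u M x u * (K u z - (u == z)%:R).
    rewrite /r /MK; under [RHS]eq_bigr do rewrite mulrBr; rewrite sumrB; congr (_ - _).
    by under eq_bigr do rewrite mulrC eq_sym; rewrite sum_ind.
  have [M0 M1] := hM.
  apply: (le_trans (ler_norm_sum _ _ _)).
  apply: (@le_trans _ _ (\sum_u M x u * eps)); last by rewrite -mulr_suml M1 mul1r.
  apply: ler_sum => u _; rewrite normrM (ger0_norm (M0 x u)); apply: ler_wpM2l => //.
  have [->|ne] := eqVneq u z.
    have := r_le1 R A (K z) (K0 z) (K1 z) z; have := hKd z; rewrite ler_norml /=; lra.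
  by rewrite /= subr0 ger0_norm ?K0 // Kle.
have PS := sum_prod_one R A b r (r1 x).
have P0 w : 0 <= \prod_c r (w c) by apply: prodr_ge0 => c _; apply: r0.
have E1 : 1 - Q M psi K x x =
   \sum_(w : {ffun 'I_b -> A}) (\prod_c r (w c)) * (psi w != x)%:R.
  rewrite /Q -[X in X - _]PS -sumrB; apply: eq_bigr => w _; rewrite -{1}[\prod_c _]mulr1 -mulrBr; congr (_ * _).
  by case: eqP => _ /=; rewrite ?subrr ?subr0.
have ind w : (psi w != x)%:R <=
    \sum_z ((eps * b%:R <= `|Nz w z - b%:R * r z|)%R)%:R :> R.
  case: (eqVneq (psi w) x) => [_|ne] /=; first by apply: sumr_ge0.
  have [z hz] : exists z, ~~ (`|Nz w z / b%:R - M x z| < gam / (2 * m)).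
    apply/existsP; rewrite -negb_forall; apply: contra ne => /forallP H0.
    by apply/eqP/psi_ok => z; apply: H0.
  rewrite (bigD1 z) //=.
  have -> : (eps * b%:R <= `|Nz w z - b%:R * r z|) = true.
    have -> : Nz w z - b%:R * r z = b%:R * (Nz w z / b%:R - r z).
      by field; rewrite gt_eqF.
    rewrite normrM (ger0_norm (ltW bR)) [X in _ <= X]mulrC ler_pM2r //; apply/idP.
    have h2 : gam / (2 * m) = 2 * eps by rewrite he; field; rewrite gt_eqF.
    move: hz; rewrite -leNgt h2 => hz.
    have := close z.
    have := ler_normD (Nz w z / b%:R - r z) (r z - M x z).
    rewrite addrA subrK.
    move: (`|_ - r z|) (`| _ - M x z|) (`|r z - M x z|) hz => u1 u2 u3; lra.
  by rewrite /= lerDl sumr_ge0.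
rewrite lerBlDr -lerBlDl E1.
apply: (@le_trans _ _ (\sum_(w : {ffun 'I_b -> A}) (\prod_c r (w c)) *
    \sum_z ((eps * b%:R <= `|Nz w z - b%:R * r z|)%R)%:R)).
  by apply: ler_sum => w _; apply: ler_wpM2l.
under eq_bigr do rewrite mulr_sumr.
rewrite exchange_big /=.
apply: (@le_trans _ _ (\sum_(z : A) (b%:R * eps ^+ 2)^-1)).
  by apply: ler_sum => z _; apply: cheb => //; [apply: r0 | apply: r1].
rewrite sumr_const.
apply: le_trans hb; rewrite /m -[_ *+ #|_|]mulr_natl; exact: lexx.
Qed.

End Good.

Lemma two_le1 (R : realType) (A : finType) (K : A -> A -> R) y z :
  stochastic K -> y != z -> K y y + K y z <= 1.
Proof.
case=> K0 K1 ne; rewrite -(K1 y) (bigD1 y) //= lerD2l (bigD1 z) 1?eq_sym //= lerDl.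
by apply: sumr_ge0.
Qed.

Lemma Idk_stoch (R : realType) (A : finType) : stochastic (Idk R A).
Proof.
split; first by move=> x y; rewrite /Idk ler0n.
by move=> x; rewrite /Idk; under eq_bigr do rewrite -[_%:R]mulr1; rewrite sum_ind.
Qed.

Theorem theorem6p1 (R : realType) (A : finType) (M : A -> A -> R) :
  (1 < #|A|)%N ->
  ergodic M ->
  (forall i j : A, i != j -> exists l : A, M i l != M j l) ->
  exists b0 : nat, forall b : nat, (b0 <= b)%N -> reconstruction_solvable b M.
Proof.
move=> hA [hM _] hsep.
case/card_gt1P: hA => i [j [_ _ ij]].
pose dd (p : A * A) := \sum_z `|M p.1 z - M p.2 z|.
pose gam := \prod_(p : A * A | p.1 != p.2) Num.min 1 (dd p).
have dpos p : p.1 != p.2 -> 0 < dd p.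
  move=> /hsep [l hl]; apply: (@lt_le_trans _ _ `|M p.1 l - M p.2 l|).
    by rewrite normr_gt0 subr_eq0.
  by rewrite /dd (bigD1 l) //= lerDl sumr_ge0.
have fac p : p.1 != p.2 -> 0 <= Num.min 1 (dd p) <= 1.
  move=> h; apply/andP; split; first by rewrite le_min ler01 ltW ?dpos.
  by rewrite ge_min lexx.
have gam0 : 0 < gam.
  by apply: prodr_gt0 => p h; rewrite lt_min ltr01 dpos.
have gam1 : gam <= 1 by apply: prodr_ile1.
have sep : forall i j, i != j -> gam <= \sum_z `|M i z - M j z|.
  move=> i' j' ne; rewrite /gam (bigD1 (i', j')) //=.
  apply: (@le_trans _ _ (Num.min 1 (dd (i', j')) * 1)).
    apply: ler_wpM2l; first by case/andP: (fac (i', j') ne).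
    by apply: prodr_ile1 => p /andP[h _]; apply: fac.
  by rewrite mulr1 ge_min lexx orbT.
pose m : R := #|A|%:R.
have m1 : 1 <= m by rewrite /m ler1n; apply/card_gt0P; exists i.
pose eps := gam / (4 * m).
have ep : 0 < eps by apply: divr_gt0 => //; apply: mulr_gt0; lra.
have e14 : eps <= 1/4.
  have : eps * (4 * m) = gam by rewrite /eps; field; rewrite gt_eqF //; lra.
  nra.
pose b0 := (Num.trunc (m / eps ^+ 3)).+1.
exists b0 => b hb.
have bR : (b0%:R : R) <= b%:R by rewrite ler_nat.
have hb0 : m / eps ^+ 3 < b%:R by apply: lt_le_trans bR; apply: truncnS_gt.
have bpos : (0 < b)%N by apply: leq_trans hb.
have bRp : 0 < (b%:R : R) by rewrite ltr0n.
have hbe : m / (b%:R * eps ^+ 2) <= eps.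
  have e2 : 0 < eps ^+ 2 := exprn_gt0 2 ep.
  have e3 : 0 < eps ^+ 3 := exprn_gt0 3 ep.
  have be2 : 0 < b%:R * eps ^+ 2 := mulr_gt0 bRp e2.
  rewrite ler_pdivrMr //.
  move: hb0; rewrite ltr_pdivrMr // => h.
  apply: ltW; apply: (lt_le_trans h); rewrite le_eqVlt; apply/orP; left; apply/eqP.
  by rewrite !exprS expr0; ring.
set psi' := psi R A b M i gam.
have good : forall n K, stochastic K -> (forall y, 1 - eps <= K y y) ->
    stochastic (iterQ R A b M psi' n K) /\
    (forall y, 1 - eps <= iterQ R A b M psi' n K y y).
  elim=> [|n IH] K hK hd //=.
  apply: IH; first exact: Q_stoch.
  exact: (good_step R A b M hM i gam gam0 sep K eps hK erefl hd bpos hbe).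
pose u n := DV (lawL b M n i) (lawL b M n j).
have ub n : 1/4 <= u n.
  have Idd : forall y, 1 - eps <= Idk R A y y by move=> y; rewrite /Idk eqxx /=; lra.
  have [[K0 K1] hd] := good n (Idk R A) (Idk_stoch R A) Idd.
  set K := iterQ R A b M psi' n (Idk R A) in K0 K1 hd.
  have key : \sum_s (lawL b M n i s - lawL b M n j s) * (g A b psi' n s == i)%:R
      = K i i - K j i.
    under eq_bigr do rewrite mulrBl.
    rewrite sumrB; congr (_ - _).
      by under eq_bigr do rewrite lawL_H; rewrite main.
    by under eq_bigr do rewrite lawL_H; rewrite main.
  have Kji : K j i <= eps.
    have := two_le1 R A K j i (conj K0 K1) (ltac:(by rewrite eq_sym)).
    have := hd j; lra.
  have le1 : \sum_s (lawL b M n i s - lawL b M n j s) * (g A b psi' n s == i)%:R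
      <= \sum_s `|lawL b M n i s - lawL b M n j s|.
    apply: ler_sum => s _; case: (g A b psi' n s == i) => /=.
      by rewrite mulr1 ler_norm.
    by rewrite mulr0 normr_ge0.
  rewrite /u /DV; move: le1; rewrite key; have := hd i.
  move: (\sum_s _) => S; lra.
have cv : cvgn (fun n => DV (lawL b M n i) (lawL b M n j)).
  apply: nonincreasing_is_cvgn.
    by apply/nonincreasing_seqP => n; apply: DV_mono.
  exists 0 => _ [n _ <-]; rewrite /u /DV; apply: mulr_ge0; first by rewrite invr_ge0 ler0n.
  by apply: sumr_ge0 => s _.
exists i, j; split => //.
apply: (@lt_le_trans _ _ (1/4)); first lra.
by apply: limr_ge => //; apply: nearW.
Qed.
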